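(* Let $R$, $G$, $*$, $\sigma$ and $\mathcal{S}$ be as in the context, and suppose $\mathcal{S}$ is anticommutative. Let $y\in G_*$, $x\in G\setminus G_*$, and $\alpha\in R$ with $\alpha y\in\mathcal{S}$. Then: - (i) $x^y\in\{x,x^*\}$; - (ii) $xy\in G_*$ if and only if $xy\neq yx$; - (iii) if $xy\neq yx$, then $\alpha(1+\sigma(x))=0$; if $xy=yx$, then $2\alpha=0$; - (iv) $(x,y^2)=(x^2,y)=(xx^*,y)=1$.
   Context: Throughout, $R$ is a commutative ring with unity with $\operatorname{char}(R)\neq 2$, and $\mathcal{U}(R)$ is its unit group. $G$ is a group with an involution $*$, i.e. a map $x\mapsto x^*$ with $(xy)^*=y^*x^*$ and $(x^* )^*=x$. The map $\sigma:G\to\mathcal{U}(R)$ is a nontrivial group homomorphism with kernel $N=\ker\sigma$, and it is compatible with $*$: $xx^*\in N$ for all $x\in G$. The group ring $RG$ carries the involution $\left(\sum_{x\in G}\alpha_x x\right)^{\sigma*}=\sum_{x\in G}\sigma(x)\alpha_x x^*$. Write $G_*=\{x\in G: x^*=x\}$ and $N_*=G_*\cap N$. Let $\mathcal{S}$ be the $R$-submodule of $RG$ spanned by the union of the following three sets: - $2\mathcal{S}_1=\{2x: x\in N_*\}$; - $\mathcal{S}_2=\{\alpha x: x\in G_*\setminus N,\ \alpha\in R,\ \alpha(1-\sigma(x))=0\}$; - $\mathcal{S}_3=\{x+\sigma(x)x^*: x\in G\setminus G_*\}$. $\mathcal{S}$ is called anticommutative if $ab+ba=0$ for all $a,b\in\mathcal{S}$.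 The conjugate of $x$ by $y$ is $x^y=y^{-1}xy$, and the commutator is $(x,y)=x^{-1}y^{-1}xy$. *)

(* Defs.v *)
From HB Require Import structures.
From mathcomp Require Import all_boot all_order all_algebra all_fingroup.
Set Implicit Arguments. Unset Strict Implicit. Unset Printing Implicit Defensive.
Import GRing.Theory.
Local Open Scope ring_scope.

(* The group ring RG is modelled by formal finite R-linear combinations of
   group elements: a list [:: (r_1, g_1); ...; (r_k, g_k)] stands for
   r_1 g_1 + ... + r_k g_k.  Two such lists denote the same element of RG iff
   they have the same coefficient function [rg_coef]. *)
Section GroupRing.
Variables (R : comNzRingType) (G : groupType).

Definition rg := seq (R * G).

Definition rg_coef (a : rg) (g : G) : R := \sum_(p <- a | p.2 == g) p.1.

Definition rg_mul (a b : rg) : rg :=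
  [seq (p.1 * q.1, (p.2 * q.2)%g) | p <- a, q <- b].

Definition rg_add (a b : rg) : rg := a ++ b.

Definition rg_scale (r : R) (a : rg) : rg := [seq (r * p.1, p.2) | p <- a].

Definition rg_eq (a b : rg) : Prop := forall g, rg_coef a g = rg_coef b g.

Definition S_gen (star : G -> G) (sigma : G -> R) (a : rg) : Prop :=
  (exists x : G, star x = x /\ sigma x = 1 /\ a = [:: (2%:R, x)]) \/
  (exists (x : G) (al : R), star x = x /\ sigma x != 1 /\
      al * (1 - sigma x) = 0 /\ a = [:: (al, x)]) \/
  (exists x : G, star x != x /\ a = [:: (1, x); (sigma x, star x)]).

Definition in_S (star : G -> G) (sigma : G -> R) (a : rg) : Prop :=
  exists l : seq (R * rg),
    (forall p, p \in l -> S_gen star sigma p.2) /\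
    rg_eq a (flatten [seq rg_scale p.1 p.2 | p <- l]).

Definition S_anticomm (star : G -> G) (sigma : G -> R) : Prop :=
  forall a b, in_S star sigma a -> in_S star sigma b ->
    rg_eq (rg_add (rg_mul a b) (rg_mul b a)) [::].

End GroupRing.

(* Main.v *)
Require Import Defs.
From HB Require Import structures.
From mathcomp Require Import all_boot all_order all_algebra all_fingroup.
From mathcomp Require Import ring.
Import GRing.Theory.
Local Open Scope ring_scope.

Set Implicit Arguments.
Section Aux.
Variables (R : comNzRingType) (G : groupType).

Lemma rgc_nil (g : G) : rg_coef ([::] : rg R G) g = 0.
Proof. by rewrite /rg_coef big_nil. Qed.

Lemma rgc_cons (r : R) (h : G) (a : rg R G) g :
  rg_coef ((r, h) :: a) g = (if h == g then r else 0) + rg_coef a g.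
Proof. by rewrite /rg_coef big_cons /=; case: ifP => _; rewrite ?add0r. Qed.

Lemma rgc_cat (a b : rg R G) g : rg_coef (a ++ b) g = rg_coef a g + rg_coef b g.
Proof. by rewrite /rg_coef big_cat. Qed.

Lemma scale1 (a : rg R G) : rg_scale 1 a = a.
Proof. by elim: a => [|[r h] a IH] //=; rewrite mul1r IH. Qed.

Lemma gen_in_S star sigma (a : rg R G) : S_gen star sigma a -> in_S star sigma a.
Proof.
move=> Ha; exists [:: (1, a)]; split.
  by move=> p; rewrite inE => /eqP->.
by move=> g /=; rewrite cats0 scale1.
Qed.

Lemma neq_l (x a b : G) : a != b -> (x * a == x * b)%g = false.
Proof. by move=> ne; apply: contraNF ne => /eqP/mulgI->. Qed.
Lemma neq_r (x a b : G) : a != b -> (a * x == b * x)%g = false.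
Proof. by move=> ne; apply: contraNF ne => /eqP/mulIg->. Qed.

End Aux.
Unset Implicit Arguments.

Section Main.
Variables (R : comNzRingType) (G : groupType) (star : G -> G) (sigma : G -> R).
Hypothesis hchar : (2%:R : R) != 0.
Hypothesis hsigU : forall x : G, exists u : R, sigma x * u = 1.
Hypothesis hanti : S_anticomm star sigma.

Lemma two_unit (r : R) (x : G) : 2%:R * (sigma x * r) = 0 -> 2%:R * r = 0.
Proof.
case: (hsigU x) => u hu h.
have -> : 2%:R * r = 2%:R * (sigma x * r) * u.
  by transitivity (2%:R * r * (sigma x * u)); [rewrite hu mulr1 | ring].
by rewrite h mul0r.
Qed.

Lemma sq_facts (x : G) : star x != x ->
  [/\ (star x * star x = x * x)%g, (x * star x = star x * x)%g & (4%:R : R) = 0].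
Proof.
move=> hx.
set s : rg R G := [:: (1, x); (sigma x, star x)].
have Ss : in_S star sigma s by apply: gen_in_S; right; right; exists x.
have H := hanti s s Ss Ss.
have hx' : x != star x by rewrite eq_sym.
have E1 : (star x * star x == x * x)%g.
  apply/negPn/negP => ne; move: (H (x * x)%g).
  rewrite /rg_add /rg_mul /= !rgc_cons rgc_nil eqxx (@neq_l _ _ _ _ hx) (@neq_r _ _ _ _ hx)
    (negbTE ne) => h.
  by move/eqP: hchar; apply; rewrite -h; ring.
have E2 : (star x * x == x * star x)%g.
  apply/negPn/negP => ne; move: (H (x * star x)%g).
  rewrite /rg_add /rg_mul /= !rgc_cons rgc_nil eqxx (@neq_l _ _ _ _ hx') (@neq_r _ _ _ _ hx)
    (negbTE ne) => h.
  move/eqP: hchar; apply; rewrite -(mulr1 2%:R); apply: (@two_unit 1 x).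
  by rewrite -h; ring.
split; first exact/eqP.
  by apply/esym/eqP.
move: (H (x * star x)%g).
rewrite /rg_add /rg_mul /= !rgc_cons rgc_nil eqxx (@neq_l _ _ _ _ hx') (@neq_r _ _ _ _ hx) E2 => h.
have h' : sigma x * 4%:R = 0 by rewrite -h; ring.
case: (hsigU x) => u hu.
have -> : (4%:R : R) = sigma x * 4%:R * u.
  by transitivity (4%:R * (sigma x * u)); [rewrite hu mulr1 | ring].
by rewrite h' mul0r.
Qed.

Hypothesis hsigM : forall x y : G, sigma (x * y)%g = sigma x * sigma y.
Hypothesis hsigstar : forall x : G, sigma (x * star x)%g = 1.

Lemma beta_ex (x y : G) : star x != x -> star y = y ->
  exists2 b : R, b != 0 & in_S star sigma [:: (b, y)].
Proof.
move=> hx hy; have [_ _ h4] := sq_facts x hx.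
have u2 : sigma y * sigma y = 1 by rewrite -hsigM -{2}hy hsigstar.
case: (eqVneq (sigma y) 1) => h1.
  by exists 2%:R => //; apply: gen_in_S; left; exists y.
case: (eqVneq (1 + sigma y) 0) => h2.
  exists 2%:R => //; apply: gen_in_S; right; left; exists y, 2%:R; split => //.
  split => //; split => //.
  have -> : sigma y = -1 by apply/eqP; rewrite -subr_eq0 opprK addrC h2.
  by rewrite -h4; ring.
exists (1 + sigma y) => //; apply: gen_in_S; right; left; exists y, (1 + sigma y).
do 3 split => //.
by transitivity (1 - sigma y * sigma y); [ring | rewrite u2 subrr].
Qed.

Lemma core (x y : G) (b : R) : star x != x -> in_S star sigma [:: (b, y)] ->
  ((x * y)%g = (y * x)%g \/ (x * y)%g = (y * star x)%g) \/
  (b = 0).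
Proof.
move=> hx Hb.
set s : rg R G := [:: (1, x); (sigma x, star x)].
have Ss : in_S star sigma s by apply: gen_in_S; right; right; exists x.
move: (hanti s _ Ss Hb (x * y)%g).
rewrite /rg_add /rg_mul /= !rgc_cons rgc_nil eqxx (@neq_r _ _ _ _ hx).
case: (eqVneq (y * x)%g (x * y)%g) => [e|ne1]; first by left; left.
case: (eqVneq (y * star x)%g (x * y)%g) => [e|ne2]; first by left; right.
by move=> h; right; rewrite -h; ring.
Qed.

Lemma rel (x y : G) : star x != x -> star y = y ->
  (x * y)%g = (y * x)%g \/ (x * y)%g = (y * star x)%g.
Proof.
move=> hx hy; have [b bn Hb] := beta_ex x y hx hy.
by case: (core x y b hx Hb) => // e; rewrite e eqxx in bn.
Qed.

Lemma conj_of (x y : G) : (x * y)%g = (y * x)%g -> (x ^ y)%g = x.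
Proof. by move=> e; rewrite conjgE e mulKg. Qed.
Lemma conj_of' (x y : G) : (x * y)%g = (y * star x)%g -> (x ^ y)%g = star x.
Proof. by move=> e; rewrite conjgE e mulKg. Qed.

Hypothesis hstarK : forall x : G, star (star x) = x.

Lemma conj_pair (x y : G) : star x != x -> star y = y ->
  ((x * y)%g = (y * x)%g /\ (star x * y)%g = (y * star x)%g) \/
  ((x * y)%g = (y * star x)%g /\ (star x * y)%g = (y * x)%g).
Proof.
move=> hx hy.
have hx' : star (star x) != star x by rewrite hstarK eq_sym.
have hx2 : x != star x by rewrite eq_sym.
case: (rel x y hx hy) => e1; case: (rel (star x) y hx' hy); rewrite ?hstarK => e2.
- by left.
- by case/eqP: hx2; apply: (mulIg y); rewrite e1 e2.
- by case/eqP: hx2; apply: (mulIg y); rewrite e1 e2.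
- by right.
Qed.

Lemma part3 (x y : G) (al : R) : star x != x -> star y = y ->
  in_S star sigma [:: (al, y)] ->
  ((x * y)%g != (y * x)%g -> al * (1 + sigma x) = 0) /\
  ((x * y)%g = (y * x)%g -> 2%:R * al = 0).
Proof.
move=> hx hy Ha.
set s : rg R G := [:: (1, x); (sigma x, star x)].
have Ss : in_S star sigma s by apply: gen_in_S; right; right; exists x.
move: (hanti s _ Ss Ha (x * y)%g).
rewrite /rg_add /rg_mul /= !rgc_cons rgc_nil eqxx (@neq_r _ _ _ _ hx) => h.
split.
  move=> ne.
  have e : (x * y)%g = (y * star x)%g.
    by case: (rel x y hx hy) => // e; rewrite e eqxx in ne.
  have ne' : ((y * x)%g == (x * y)%g) = false by rewrite eq_sym (negbTE ne).
  by move: h; rewrite ne' -e eqxx => h; rewrite -h; ring.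
move=> e; move: h; rewrite e eqxx (@neq_l _ _ _ _ hx) => h.
by rewrite -h; ring.
Qed.

End Main.

Theorem lemma3p9 (R : comNzRingType) (G : groupType)
  (star : G -> G) (sigma : G -> R)
  (* char R <> 2 *)
  (hchar : (2%:R : R) != 0)
  (* * is an involution of G *)
  (hstarM : forall x y : G, star (x * y)%g = (star y * star x)%g)
  (hstarK : forall x : G, star (star x) = x)
  (* sigma : G -> U(R) is a nontrivial group homomorphism *)
  (hsigU : forall x : G, exists u : R, sigma x * u = 1)
  (hsigM : forall x y : G, sigma (x * y)%g = sigma x * sigma y)
  (hsignt : exists x : G, sigma x != 1)
  (* compatibility: x x^* lies in N = ker sigma *)
  (hsigstar : forall x : G, sigma (x * star x)%g = 1)
  (* S is anticommutative *)
  (hanti : S_anticomm star sigma)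
  (y x : G) (al : R)
  (hy : star y = y) (hx : star x != x)
  (hal : in_S star sigma [:: (al, y)]) :
  [/\ (x ^ y)%g = x \/ (x ^ y)%g = star x,
      star (x * y)%g = (x * y)%g <-> (x * y)%g != (y * x)%g,
      ((x * y)%g != (y * x)%g -> al * (1 + sigma x) = 0) /\
      ((x * y)%g = (y * x)%g -> 2%:R * al = 0) &
      [/\ commg x (y ^+ 2)%g = 1%g, commg (x ^+ 2)%g y = 1%g &
          commg (x * star x)%g y = 1%g]].
Proof.
have [E1 E2 _] := @sq_facts R G star sigma hchar hsigU hanti x hx.
have cp := @conj_pair R G star sigma hchar hsigU hanti hsigM hsigstar hstarK x y hx hy.
split.
- by case: cp => [[e _]|[e _]]; [left; apply: conj_of | right; apply: conj_of'].
- rewrite hstarM hy; split.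
    move=> e; apply/negP => /eqP e2; case/eqP: hx; apply: (mulgI y).
    by rewrite e e2.
  by move=> ne; case: cp => [[e _]|[e _]] //; rewrite e eqxx in ne.
- exact: (@part3 R G star sigma hchar hsigU hanti hsigM hsigstar x y al hx hy hal).
split; apply/eqP; rewrite -conjg_fix.
- rewrite expgS expg1 conjgM.
  case: cp => [[e1 e2]|[e1 e2]].
    by rewrite !(@conj_of _ _ _ e1).
  by rewrite (@conj_of' _ star _ _ e1) conjgE e2 mulKg.
- rewrite conjXg; case: cp => [[e1 e2]|[e1 e2]].
    by rewrite (@conj_of _ _ _ e1).
  by rewrite (@conj_of' _ star _ _ e1) !expgS !expg0 !mulg1 E1.
- rewrite conjMg; case: cp => [[e1 e2]|[e1 e2]].
    by rewrite (@conj_of _ _ _ e1) conjgE e2 mulKg.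
  by rewrite (@conj_of' _ star _ _ e1) conjgE e2 mulKg E2.
Qed.
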